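(* $\mathrm{Fin}(6)=\mathrm{Adm}(6)$.
   Context: $K_4-e$ is the graph on four vertices $a,b,c,d$ with edges $ab,ac,ad,bc,bd$; it is denoted $[a,b,c-d]$. A $(K_4-e)$-design of order $v$ is a pair $(X,\mathcal B)$ where $X$ is a set of $v$ vertices and $\mathcal B$ is a collection of copies of $K_4-e$ (blocks) with vertices in $X$ whose edge sets partition the edges of $K_v$ on $X$; it has $b_v=v(v-1)/10$ blocks. For a graph $B$, $T(B)$ is the set of its triangles (3-vertex subsets inducing a triangle); e.g. $T([a,b,c-d])=\{\{a,b,c\},\{a,b,d\}\}$, and $T(\mathcal B)=\bigcup_{B\in\mathcal B}T(B)$. Two designs $(X,\mathcal B_1),(X,\mathcal B_2)$ on the same vertex set intersect in $s$ blocks if $|\mathcal B_1\cap\mathcal B_2|=s$, and in $t$ triangles if $|T(\mathcal B_1)\cap T(\mathcal B_2)|=t$. Define $\mathrm{Fin}(v)=\{(s,t):$ there exists a pair of $(K_4-e)$-designs of order $v$ on the same vertex set intersecting in $s$ blocks and $t+2s$ triangles$\}$; $J(v)=\{s:$ there is a pair of $(K_4-e)$-designs of order $v$ intersecting in $s$ blocks$\}$; $J_T(v)=\{t:$ there is a pair of $(K_4-e)$-designs of order $v$ intersecting in $t$ triangles$\}$; and $\mathrm{Adm}(v)=\{(s,t): s,t\ge 0,\ s+t\le b_v,\ s\in J(v),\ t+2s\in J_T(v)\}$. (Known from the literature: $J(6)=\{0,3\}$ and $J_T(6)=\{0,2,3,6\}$, so $\mathrm{Adm}(6)=\{(0,0),(0,2),(0,3),(3,0)\}$.)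 *)

(* Defs.v *)
From mathcomp Require Import all_boot.
Set Implicit Arguments. Unset Strict Implicit. Unset Printing Implicit Defensive.

(* Vertex set X of order v is taken to be 'I_v.  An edge is a 2-subset of X;
   a graph (block) is represented by its edge set. *)

(* The edge set of the block [a,b,c-d]: edges ab, ac, ad, bc, bd. *)
Definition K4e_edges (v : nat) (a b c d : 'I_v) : {set {set 'I_v}} :=
  [set [set a; b]; [set a; c]; [set a; d]; [set b; c]; [set b; d]].

Definition is_block (v : nat) (B : {set {set 'I_v}}) : Prop :=
  exists a b c d : 'I_v, uniq [:: a; b; c; d] /\ B = K4e_edges a b c d.

Definition Kv_edges (v : nat) : {set {set 'I_v}} := [set e : {set 'I_v} | #|e| == 2].

Definition is_design (v : nat) (D : {set {set {set 'I_v}}}) : Prop :=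
  (forall B, B \in D -> is_block B) /\ partition D (Kv_edges v).

Definition triangles (v : nat) (B : {set {set 'I_v}}) : {set {set 'I_v}} :=
  [set t : {set 'I_v} | (#|t| == 3) &&
     [forall x in t, forall y in t, (x != y) ==> ([set x; y] \in B)]].

Definition triangles_of (v : nat) (D : {set {set {set 'I_v}}}) : {set {set 'I_v}} :=
  \bigcup_(B in D) triangles B.

Definition b_v (v : nat) : nat := v * (v - 1) %/ 10.

Definition Fin (v s t : nat) : Prop :=
  exists D1 D2 : {set {set {set 'I_v}}},
    [/\ is_design D1, is_design D2, #|D1 :&: D2| = s &
        #|triangles_of D1 :&: triangles_of D2| = t + 2 * s].

Definition J (v s : nat) : Prop :=
  exists D1 D2 : {set {set {set 'I_v}}},
    [/\ is_design D1, is_design D2 & #|D1 :&: D2| = s].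

Definition J_T (v t : nat) : Prop :=
  exists D1 D2 : {set {set {set 'I_v}}},
    [/\ is_design D1, is_design D2 & #|triangles_of D1 :&: triangles_of D2| = t].

Definition Adm (v s t : nat) : Prop :=
  [/\ s + t <= b_v v, J v s & J_T v (t + 2 * s)].

(* Main.v *)
Require Import Defs.
From mathcomp Require Import all_boot zify.
Set Implicit Arguments. Unset Strict Implicit. Unset Printing Implicit Defensive.

Definition I6l : seq 'I_6 := [:: @Ordinal 6 0 isT; @Ordinal 6 1 isT; @Ordinal 6 2 isT;
  @Ordinal 6 3 isT; @Ordinal 6 4 isT; @Ordinal 6 5 isT].
Lemma mem_I6l (x : 'I_6) : x \in I6l.
Proof. by case: x => [[|[|[|[|[|[|k]]]]]] Hk]. Qed.

Definition Q := (('I_6 * 'I_6) * ('I_6 * 'I_6))%type.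
Definition K4q (q : Q) := K4e_edges q.1.1 q.1.2 q.2.1 q.2.2.
Definition quq (q : Q) := uniq [:: q.1.1; q.1.2; q.2.1; q.2.2].
Definition nrm (q : Q) := (q.1.1 < q.1.2) && (q.2.1 < q.2.2).

Definition eqo (x y : 'I_6) := nat_of_ord x == nat_of_ord y.
Definition epair (x y u v : 'I_6) := eqo x u && eqo y v || eqo x v && eqo y u.
Definition inb (x y : 'I_6) (q : Q) :=
  let: ((a, b), (c, d)) := q in
  [|| epair x y a b, epair x y a c, epair x y a d, epair x y b c | epair x y b d].
Definition inbp (p : 'I_6 * 'I_6) q := inb p.1 p.2 q.

Definition o0 : 'I_6 := @Ordinal 6 0 isT.
Definition o1 : 'I_6 := @Ordinal 6 1 isT.
Definition P15_def : seq ('I_6 * 'I_6) := [seq p <- [seq (x, y) | x <- I6l, y <- I6l] | (p : 'I_6 * 'I_6).1 < p.2].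
Definition P15 : seq ('I_6 * 'I_6) := Eval vm_compute in P15_def.
Definition AllQ : seq Q := [seq (p, r) | p <- [seq (x, y) | x <- I6l, y <- I6l], r <- [seq (x, y) | x <- I6l, y <- I6l]].
Definition Cands_def := [seq q <- AllQ | quq q && nrm q].
Definition Cands : seq Q := Eval vm_compute in Cands_def.
Definition C0_def := [seq q <- Cands | inb o0 o1 q].
Definition C0 : seq Q := Eval vm_compute in C0_def.
Definition e1 (q0 : Q) := nth (o0, o1) P15 (find (fun p => ~~ inbp p q0) P15).
Definition e2 (q0 q1 : Q) := nth (o0, o1) P15 (find (fun p => ~~ inbp p q0 && ~~ inbp p q1) P15).
Definition compat (q r : Q) :=
  ~~ has (fun p => inbp p q && inbp p r) P15 || all (fun p => inbp p q == inbp p r) P15.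
Definition good3 (t : Q * Q * Q) :=
  [&& inbp (e1 t.1.1) t.1.2, inbp (e2 t.1.1 t.1.2) t.2,
      compat t.1.1 t.1.2, compat t.1.1 t.2 & compat t.1.2 t.2].
Definition Trip_def := flatten [seq (let E1 := e1 a in flatten [seq (if inbp E1 b && compat a b then
      (let E2 := e2 a b in [seq (a, b, c) | c <- Cands & inbp E2 c]) else [::]) | b <- Cands]) | a <- C0].
Definition Trip : seq (Q * Q * Q) := Eval vm_compute in Trip_def.
Definition GL_def := [seq t <- Trip | good3 t].
Definition GL : seq (Q * Q * Q) := Eval vm_compute in GL_def.
Definition lst (t : Q * Q * Q) := [:: t.1.1; t.1.2; t.2].
Definition cover3 (t : Q * Q * Q) :=
  all (fun x => all (fun y => ~~ eqo x y ==> has (inb x y) (lst t)) I6l) I6l.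
Definition bq (q : Q) := [seq inbp p q | p <- P15].
Definition ind3 (a b c : 'I_6) := [seq [|| eqo u a, eqo u b | eqo u c] | u <- I6l].
Definition tli (q : Q) := [:: ind3 q.1.1 q.1.2 q.2.1; ind3 q.1.1 q.1.2 q.2.2].
Definition Scnt (t u : Q * Q * Q) :=
  size (undup [seq y <- map bq (lst t) | y \in map bq (lst u)]).
Definition Tcnt (t u : Q * Q * Q) :=
  size (undup [seq y <- flatten (map tli (lst t)) | y \in flatten (map tli (lst u))]).
Definition pairok t u :=
  (Scnt t u == 0) && (Tcnt t u <= 3) || (Scnt t u == 3) && (Tcnt t u == 6).
Definition CHECK := [&& all (fun t => all (fun q => q \in Cands) (lst t)) GL, all cover3 GL & all (fun t => all (pairok t) GL) GL].


Lemma CHECK_ok : CHECK = true.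
Proof. vm_compute. reflexivity. Qed.

Lemma eqoE (x y : 'I_6) : eqo x y = (x == y). Proof. by []. Qed.

Lemma set2_eqE (x y u v : 'I_6) : ([set x; y] == [set u; v]) = epair x y u v.
Proof.
rewrite /epair !eqoE; apply/eqP/idP => [E|].
  have hx : x \in [set u; v] by rewrite -E !inE eqxx.
  have hy : y \in [set u; v] by rewrite -E !inE eqxx orbT.
  have hu : u \in [set x; y] by rewrite E !inE eqxx.
  have hv : v \in [set x; y] by rewrite E !inE eqxx orbT.
  move: hx hy hu hv; rewrite !inE.
  case/orP=> /eqP-> ; case/orP=> /eqP->; rewrite ?eqxx ?orbT //=.
  - by move=> _ /orP[]/eqP->; rewrite eqxx.
  - by move=> /orP[]/eqP->; rewrite eqxx.
by case/orP=> /andP[/eqP-> /eqP->] //; apply: setUC.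
Qed.

Lemma inbE x y q : ([set x; y] \in K4q q) = inb x y q.
Proof. case: q => [[a b] [c d]]; by rewrite /K4q /K4e_edges /= !inE !set2_eqE -!orbA. Qed.

Lemma P15E : P15 = P15_def. Proof. by vm_compute. Qed.

Lemma mem_P15 (u v : 'I_6) : u < v -> (u, v) \in P15.
Proof.
move=> h; rewrite P15E /P15_def mem_filter; apply/andP; split => //.
by apply/allpairsP; exists (u, v); rewrite !mem_I6l.
Qed.

Lemma P15_neq p : p \in P15 -> p.1 != p.2.
Proof. by rewrite P15E /P15_def mem_filter => /andP[h _]; rewrite neq_ltn h. Qed.

Lemma dbl (u v : 'I_6) : u != v -> exists2 p, p \in P15 & [set u; v] = [set p.1; p.2].
Proof.
rewrite neq_ltn => /orP[h|h].
  by exists (u, v); [apply: mem_P15|].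
by exists (v, u); [apply: mem_P15| rewrite setUC].
Qed.

Lemma mem_K4q q e : quq q -> e \in K4q q -> exists2 p, p \in P15 & e = [set p.1; p.2].
Proof.
case: q => [[a b] [c d]]; rewrite /quq /K4q /K4e_edges /= !inE !andbT.
rewrite !negb_or => /and3P[/and3P[hab hac had] /andP[hbc hbd] hcd].
by rewrite -!orbA => /or4P[/eqP->|/eqP->|/eqP->|/orP[]/eqP->]; apply: dbl.
Qed.

Lemma K4q_inj q r : quq q -> quq r -> bq q = bq r -> K4q q = K4q r.
Proof.
move=> hq hr /eq_in_map H; apply/setP => e; apply/idP/idP => He.
  have [p hp E] := mem_K4q hq He; move: He; rewrite E !inbE.
  by have := H p hp; rewrite /inbp => ->.
have [p hp E] := mem_K4q hr He; move: He; rewrite E !inbE.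
by have := H p hp; rewrite /inbp => ->.
Qed.

Lemma K4q_bq q r : K4q q = K4q r -> bq q = bq r.
Proof. by move=> E; apply/eq_in_map => p _; rewrite /inbp -!inbE E. Qed.

Lemma card_inter_map (T : finType) (U : eqType) (f : T -> U) (l1 l2 : seq T) :
  {in l1 ++ l2 &, injective f} ->
  #|[set:: l1] :&: [set:: l2]| = size (undup [seq y <- map f l1 | y \in map f l2]).
Proof.
move=> Hf.
have -> : [set:: l1] :&: [set:: l2] = [set:: [seq x <- l1 | x \in l2]].
  by apply/setP=> x; rewrite !inE mem_filter andbC.
rewrite cardsE.
set s := [seq x <- l1 | x \in l2].
have -> : #|s| = #|undup s| by apply: eq_card => x; rewrite mem_undup.
move/card_uniqP: (undup_uniq s) ->.
rewrite filter_map.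
have -> : [seq x <- l1 | preim f (fun y => y \in map f l2) x] = s.
  apply: eq_in_filter => x hx /=; apply/mapP/idP => [[y hy e]|h].
    by rewrite (Hf x y) // mem_cat ?hx ?hy ?orbT.
  by exists x.
have Hs : {in s &, injective f}.
  by move=> x y; rewrite !mem_filter => /andP[_ hx] /andP[_ hy]; apply: Hf; rewrite mem_cat ?hx ?hy.
have P : perm_eq (undup (map f s)) (map f (undup s)).
  apply: uniq_perm; first exact: undup_uniq.
    rewrite map_inj_in_uniq ?undup_uniq // => x y; rewrite !mem_undup; exact: Hs.
  by move=> y; rewrite mem_undup; apply/mapP/mapP => [[x hx ->]|[x hx ->]]; exists x; rewrite ?mem_undup in hx *.
by rewrite (perm_size P) size_map.
Qed.

Lemma cards3E (a b c : 'I_6) : uniq [:: a; b; c] -> #|[set a; b; c]| = 3.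
Proof.
rewrite /= !inE negb_or andbT => /andP[/andP[hab hac] hbc].
have -> : [set a; b; c] = a |: [set b; c] by apply/setP=> u; rewrite !inE orbA.
by rewrite cardsU1 cards2 !inE negb_or hab hac hbc.
Qed.

Lemma card3P (t : {set 'I_6}) : #|t| = 3 ->
  exists x y z, uniq [:: x; y; z] /\ t = [set x; y; z].
Proof.
move=> Ht.
have [x hx] : exists x, x \in t.
  by apply/set0Pn; apply: contraTneq isT => E; move: Ht; rewrite E cards0.
have H2 : #|t :\ x| == 2 by move: Ht; rewrite (cardsD1 x) hx add1n => -[->].
have [y [z [hyz E]]] := cards2P _ H2.
have hy : y \in t :\ x by rewrite E !inE eqxx.
have hz : z \in t :\ x by rewrite E !inE eqxx orbT.
move: hy hz; rewrite !inE => /andP[hyx _] /andP[hzx _].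
exists x, y, z; split.
  by rewrite /= !inE negb_or andbT hyz eq_sym hyx eq_sym hzx.
rewrite -(setD1K hx) E; apply/setP=> u; rewrite !inE orbA //.
Qed.

Lemma tri_forall (x y z : 'I_6) (B : {set {set 'I_6}}) : uniq [:: x; y; z] ->
  [forall u in [set x; y; z], forall v in [set x; y; z], (u != v) ==> ([set u; v] \in B)] =
  [&& [set x; y] \in B, [set x; z] \in B & [set y; z] \in B].
Proof.
rewrite /= !inE negb_or andbT => /andP[/andP[hxy hxz] hyz].
apply/idP/idP.
  move=> H.
  have G : forall u v, u \in [set x; y; z] -> v \in [set x; y; z] -> u != v -> [set u; v] \in B.
    move=> u v hu hv huv; move/forallP: H => /(_ u); rewrite hu /= => /forallP/(_ v).
    by rewrite hv huv.
  by rewrite !G // !inE eqxx ?orbT.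
case/and3P => h1 h2 h3; apply/forallP => u; apply/implyP => hu; apply/forallP => v.
apply/implyP => hv; apply/implyP => huv.
move: hu hv huv; rewrite !inE -!orbA.
case/or3P=> /eqP->; case/or3P=> /eqP->; rewrite ?eqxx // => _; by rewrite setUC.
Qed.

Definition ind (t : {set 'I_6}) := [seq x \in t | x <- I6l].
Lemma ind_inj : injective ind.
Proof. by move=> t1 t2 /eq_in_map H; apply/setP => x; apply: H; apply: mem_I6l. Qed.
Lemma ind3E (a b c : 'I_6) : ind [set a; b; c] = ind3 a b c.
Proof. by apply: eq_map => u; rewrite !inE !eqoE -orbA. Qed.

Definition tl (q : Q) := [:: [set q.1.1; q.1.2; q.2.1]; [set q.1.1; q.1.2; q.2.2]].

Definition TRIC := all (fun q => all (fun x => all (fun y => all (fun z =>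
  (~~ eqo x y && ~~ eqo x z && ~~ eqo y z) ==>
  ([&& inb x y q, inb x z q & inb y z q] == (ind3 x y z \in tli q))) I6l) I6l) I6l) Cands.
Lemma TRIC_ok : TRIC = true. Proof. by vm_compute. Qed.

Lemma CandsE : Cands = Cands_def. Proof. by vm_compute. Qed.
Lemma Cands_quq q : q \in Cands -> quq q.
Proof. by rewrite CandsE mem_filter => /andP[/andP[]]. Qed.

Lemma trianglesE q : q \in Cands -> triangles (K4q q) = [set:: tl q].
Proof.
move=> hq; have hu := Cands_quq hq.
apply/setP => t; rewrite /triangles !inE.
case Ht: (#|t| == 3) => /=.
  have [x [y [z [U ->]]]] := card3P (eqP Ht).
  rewrite tri_forall // !inbE -!(inj_eq ind_inj) !ind3E.
  move/allP: TRIC_ok => /(_ q hq) /allP /(_ x (mem_I6l x)) /allP /(_ y (mem_I6l y))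
    /allP /(_ z (mem_I6l z)).
  move: U; rewrite /= !inE negb_or andbT => /andP[/andP[hxy hxz] hyz].
  by rewrite !eqoE hxy hxz hyz /= => /eqP.
symmetry; apply/negP => /orP[] /eqP E; move: Ht; rewrite E cards3E //.
  by move: hu; rewrite /quq /= !inE !negb_or; case/andP=> /and3P[-> -> _] /andP[/andP[-> _] _].
by move: hu; rewrite /quq /= !inE !negb_or; case/andP=> /and3P[-> _ ->] /andP[/andP[_ ->] _].
Qed.

Lemma tri_of l : {subset l <= Cands} -> triangles_of [set:: map K4q l] = [set:: flatten (map tl l)].
Proof.
move=> H; apply/setP => t; rewrite /triangles_of inE; apply/bigcupP/flattenP.
  case=> B; rewrite inE => /mapP[q hq ->]; rewrite trianglesE ?(H q hq) // inE => ht.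
  by exists (tl q) => //; apply: map_f.
case=> s /mapP[q hq ->] ht; exists (K4q q); first by rewrite inE; apply: map_f.
by rewrite trianglesE ?(H q hq) // inE.
Qed.

Definition bB (B : {set {set 'I_6}}) := [seq [set p.1; p.2] \in B | p <- P15].
Lemma bBE q : bB (K4q q) = bq q.
Proof. by apply: eq_map => p; rewrite inbE. Qed.

Lemma Scount l1 l2 : {subset l1 <= Cands} -> {subset l2 <= Cands} ->
  #|[set:: map K4q l1] :&: [set:: map K4q l2]| =
  size (undup [seq y <- map bq l1 | y \in map bq l2]).
Proof.
move=> H1 H2; rewrite (card_inter_map (f := bB)).
  by rewrite -!map_comp !(@eq_map _ _ (bB \o K4q) bq bBE).
move=> B1 B2; rewrite -map_cat => /mapP[q hq ->] /mapP[r hr ->].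
have hc : forall x, x \in l1 ++ l2 -> quq x.
  by move=> x; rewrite mem_cat => /orP[] h; apply: Cands_quq; [apply: H1|apply: H2].
by rewrite !bBE => E; apply: K4q_inj => //; apply: hc.
Qed.

Lemma Tcount l1 l2 : {subset l1 <= Cands} -> {subset l2 <= Cands} ->
  #|triangles_of [set:: map K4q l1] :&: triangles_of [set:: map K4q l2]| =
  size (undup [seq y <- flatten (map tli l1) | y \in flatten (map tli l2)]).
Proof.
move=> H1 H2; rewrite !tri_of // (card_inter_map (f := ind)); last by move=> ? ? _ _; apply: ind_inj.
have E : forall l, map ind (flatten (map tl l)) = flatten (map tli l).
  move=> l; rewrite map_flatten -map_comp; congr flatten; apply: eq_map => q.
  by rewrite /= !ind3E.
by rewrite !E.
Qed.

Lemma K4e_swap1 (a b c d : 'I_6) : K4e_edges b a c d = K4e_edges a b c d.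
Proof.
apply/setP=> e; rewrite /K4e_edges !inE (setUC [set b] [set a]).
case: (e == [set a; b]); case: (e == [set a; c]); case: (e == [set a; d]); case: (e == [set b; c]); by case: (e == [set b; d]).
Qed.
Lemma K4e_swap2 (a b c d : 'I_6) : K4e_edges a b d c = K4e_edges a b c d.
Proof.
apply/setP=> e; rewrite /K4e_edges !inE.
case: (e == [set a; b]); case: (e == [set a; c]); case: (e == [set a; d]); case: (e == [set b; c]); by case: (e == [set b; d]).
Qed.

Lemma uniq_swap (a b c d : 'I_6) : uniq [:: a; b; c; d] ->
  uniq [:: b; a; c; d] /\ uniq [:: a; b; d; c].
Proof.
rewrite /= !inE !negb_or !andbT => /and3P[/and3P[h1 h2 h3] /andP[h4 h5] h6].
by rewrite ![b == a]eq_sym ![d == c]eq_sym h1 h2 h3 h4 h5 h6.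
Qed.

Lemma AllQ_mem q : q \in AllQ.
Proof.
case: q => [[a b] [c d]]; apply/allpairsP; exists ((a, b), (c, d)); split => //.
  by apply/allpairsP; exists (a, b); rewrite !mem_I6l.
by apply/allpairsP; exists (c, d); rewrite !mem_I6l.
Qed.

Lemma norm_block (a b c d : 'I_6) : uniq [:: a; b; c; d] ->
  exists2 q, q \in Cands & K4e_edges a b c d = K4q q.
Proof.
move=> U.
have H : forall a b c d : 'I_6, uniq [:: a; b; c; d] -> a < b -> c < d ->
   exists2 q, q \in Cands & K4e_edges a b c d = K4q q.
  move=> a' b' c' d' U' h1 h2; exists ((a', b'), (c', d')) => //.
  by rewrite CandsE mem_filter AllQ_mem andbT /nrm /= h1 h2 !andbT; exact: U'.
have [U1 U2] := uniq_swap U.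
have [U3 _] := uniq_swap U2.
move: (U); rewrite /= !inE !negb_or => /andP[/and3P[hab _ _] /andP[/andP[_ _] /andP[hcd _]]].
move: hab hcd; rewrite !neq_ltn => /orP[hab|hab] /orP[hcd|hcd].
- exact: H.
- by rewrite -K4e_swap2; apply: H.
- by rewrite -K4e_swap1; apply: H.
- by rewrite -K4e_swap1 -K4e_swap2; apply: H.
Qed.

Lemma C0E : C0 = C0_def. Proof. by vm_compute. Qed.
Lemma TripE : Trip = Trip_def. Proof. by vm_compute. Qed.
Lemma GLE : GL = GL_def. Proof. by vm_compute. Qed.

Lemma nth_P15 i : nth (o0, o1) P15 i \in P15.
Proof.
case: (ltnP i (size P15)) => h; first exact: mem_nth.
by rewrite nth_default.
Qed.

Lemma P15_edge p : p \in P15 -> [set p.1; p.2] \in Kv_edges 6.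
Proof. by move=> hp; rewrite inE cards2 P15_neq. Qed.

Section Classify.
Variable D : {set {set {set 'I_6}}}.
Hypothesis HD : is_design D.

Lemma sameB B1 B2 e : B1 \in D -> B2 \in D -> e \in B1 -> e \in B2 -> B1 = B2.
Proof.
case: HD => _ /and3P[_ Ht _] h1 h2 he1 he2.
case: (eqVneq B1 B2) => // /(trivIsetP Ht B1 B2 h1 h2) dis.
by rewrite (disjointFr dis he1) in he2.
Qed.

Lemma getb e : e \in Kv_edges 6 -> exists2 q, q \in Cands & (K4q q \in D) && (e \in K4q q).
Proof.
case: HD => Hb /and3P[/eqP Hc _ _]; rewrite -Hc => /bigcupP[B hB he].
have [a [b [c [d [U E]]]]] := Hb B hB.
have [q hq E'] := norm_block U.
by exists q => //; rewrite -E' -E hB.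
Qed.

Lemma compat_of q r : K4q q \in D -> K4q r \in D -> compat q r.
Proof.
move=> hq hr; rewrite /compat; case: hasP => [[p hp /andP[h1 h2]]|_]; last by [].
rewrite orFb; rewrite /inbp -!inbE in h1 h2.
have E := sameB hq hr h1 h2.
by apply/allP => p' _; rewrite /inbp -!inbE E.
Qed.

Lemma classify : exists2 t, t \in GL & D = [set:: map K4q (lst t)].
Proof.
have [q0 hq0 /andP[hD0 he0]] := getb (P15_edge (mem_P15 (isT : o0 < o1))).
have [q1 hq1 /andP[hD1 he1]] := getb (P15_edge (nth_P15 (find (fun p => ~~ inbp p q0) P15))).
have [q2 hq2 /andP[hD2 he2]] := getb (P15_edge (nth_P15 (find (fun p => ~~ inbp p q0 && ~~ inbp p q1) P15))).
rewrite inbE in he0; rewrite inbE in he1; rewrite inbE in he2.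
have G : good3 (q0, q1, q2).
  by rewrite /good3 /= /inbp he1 he2 !compat_of.
have GL0 : (q0, q1, q2) \in GL.
  rewrite GLE mem_filter G TripE.
  have hC0 : q0 \in C0 by rewrite C0E mem_filter hq0 andbT; exact: he0.
  apply/flattenP; eexists; first exact: (map_f _ hC0).
  cbv beta; apply/flattenP; eexists; first exact: (map_f _ hq1).
  cbv beta; rewrite /inbp he1 compat_of //.
  by apply: (map_f (fun c => (q0, q1, c))); rewrite mem_filter hq2 andbT.
exists (q0, q1, q2) => //.
have /and3P[_ /allP Hcov _] := CHECK_ok.
apply/setP => B; rewrite inE; apply/idP/idP => [hB|].
  case: HD => Hb _; have [a [b [c [d [U E]]]]] := Hb B hB.
  have hab : a != b by move: U; rewrite /= inE negb_or => /andP[/andP[]].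
  have hB1 : [set a; b] \in B by rewrite E !inE eqxx.
  move/allP: (Hcov _ GL0) => /(_ a (mem_I6l a)) /allP /(_ b (mem_I6l b)).
  rewrite eqoE hab implyTb => /hasP[q hq hin].
  rewrite -inbE in hin.
  have hqD : K4q q \in D by move: hq; rewrite !inE => /or3P[]/eqP->.
  by rewrite (sameB hB hqD hB1 hin); apply: map_f.
by move=> /mapP[q]; rewrite !inE => /or3P[]/eqP-> ->.
Qed.
End Classify.

Lemma key (D1 D2 : {set {set {set 'I_6}}}) : is_design D1 -> is_design D2 ->
  let s := #|D1 :&: D2| in let T := #|triangles_of D1 :&: triangles_of D2| in
  (s == 0) && (T <= 3) || (s == 3) && (T == 6).
Proof.
move=> h1 h2; have [t ht ->] := classify h1; have [u hu ->] := classify h2.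
have /and3P[/allP Hc _ /allP Hp] := CHECK_ok.
have sub : forall t, t \in GL -> {subset lst t <= Cands}.
  by move=> t' ht' q hq; move/allP: (Hc t' ht') => /(_ q hq).
cbv zeta; rewrite (Scount (sub t ht) (sub u hu)) (Tcount (sub t ht) (sub u hu)).
by move/allP: (Hp t ht) => /(_ u hu).
Qed.

Theorem theorem4p3 : forall s t : nat, Fin 6 s t <-> Adm 6 s t.
Proof.
have bv : b_v 6 = 3 by [].
move=> s t; split.
  case=> [D1 [D2 [h1 h2 hs hT]]].
  have := key h1 h2; rewrite /= hs hT => K.
  split; [|by exists D1, D2|by exists D1, D2].
  rewrite bv; case/orP: K => /andP[/eqP h0 /eqP h1'] //; lia.
case=> Hst [D1 [D2 [h1 h2 hs]]] [D3 [D4 [h3 h4 hT]]].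
rewrite bv in Hst.
have := key h1 h2; rewrite /= hs.
case/orP => /andP[/eqP s0 hT12].
  rewrite s0 in Hst hT hs *; clear hs; have := key h3 h4; rewrite /= hT.
  case/orP => /andP[/eqP s34 hT34].
    by exists D3, D4; split => //; lia.
  lia.
rewrite s0 in Hst hs *; have t0 : t = 0 by lia.
subst t; exists D1, D2; split => //; exact/eqP.
Qed.
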